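(* For every integer $t\ge 2$ and every $\varepsilon>0$ the following holds for infinitely many $k$. There exist a vertex set $V$ containing a terminal set $K$ with $|K|=k$ and $k=o(|V|)$, and a family $\mathcal G$ of unweighted undirected graphs on vertex set $V$, each with $O(|V|)$ edges, such that any data structure (i.e., any encoding map $f$ from $\mathcal G$ to bit strings together with a decoding procedure that, given only $f(G)$, outputs for every pair $x,x'\in K$ an estimate $\delta(x,x')$) which satisfies either $d_G(x,x')\le \delta(x,x')\le (t-\varepsilon)\,d_G(x,x')$ for all $x,x'\in K$ and all $G\in\mathcal G$, or $d_G(x,x')\le \delta(x,x')\le d_G(x,x')+2t-3$ for all $x,x'\in K$ and all $G\in\mathcal G$, must use $\Omega(k^{1+1/(t-1)})$ bits on some $G\in\mathcal G$.
   Context: $d_G(x,x')$ denotes the shortest-path (hop) distance between $x$ and $x'$ in the unweighted graph $G$. *)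

(* Defs.v *)
From mathcomp Require Import all_boot.
From Stdlib Require Import Reals.

Set Implicit Arguments.
Unset Strict Implicit.
Unset Printing Implicit Defensive.

(* An undirected unweighted simple graph on vertex set 'I_n is given by its
   edge set: a set of 2-element subsets of 'I_n. *)
Definition graph (n : nat) := {set {set 'I_n}}.

Definition simple_graph n (G : graph n) : Prop :=
  forall e, e \in G -> #|e| = 2.

Definition nedges n (G : graph n) : nat := #|G|.

Definition adj n (G : graph n) : rel 'I_n :=
  fun x y => (x != y) && ([set x; y] \in G).

(* x :: p is a walk from x to y of length size p *)
Definition walk n (G : graph n) (x y : 'I_n) (p : seq 'I_n) : Prop :=
  path (adj G) x p /\ last x p = y.

Definition connected n (G : graph n) (x y : 'I_n) : Prop :=
  exists p, walk G x y p.

Definition is_dist n (G : graph n) (x y : 'I_n) (d : nat) : Prop :=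
  (exists p, walk G x y p /\ size p = d) /\
  (forall p, walk G x y p -> (d <= size p)%N).

(* An estimate is [Some r] (a real number) or [None] (meaning +infinity).
   Since d_G(x,x') = +infinity for disconnected x,x', the sandwich
   d <= delta <= (t-eps) d forces delta = +infinity exactly in that case. *)
Definition mult_ok n (G : graph n) (x y : 'I_n) (a : R) (est : option R) : Prop :=
  match est with
  | Some r => exists d, is_dist G x y d /\ (INR d <= r)%R /\ (r <= a * INR d)%R
  | None => ~ connected G x y
  end.

Definition add_ok n (G : graph n) (x y : 'I_n) (b : R) (est : option R) : Prop :=
  match est with
  | Some r => exists d, is_dist G x y d /\ (INR d <= r)%R /\ (r <= INR d + b)%R
  | None => ~ connected G x y
  end.

(* Main.v *)
Require Import Defs.
From mathcomp Require Import all_boot.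
From Stdlib Require Import Reals.
From mathcomp Require Import zify.
From Stdlib Require Import Lra.
From Stdlib Require ZArith.

Set Implicit Arguments.
Unset Strict Implicit.
Unset Printing Implicit Defensive.

Section Balls.
Variable T : finType.
Implicit Types (E : {set T * T}) (u v w x : T).

Definition nbr E x := [set w | (x, w) \in E].
Fixpoint ball E u j : {set T} :=
  if j is j'.+1 then ball E u j' :|: \bigcup_(x in ball E u j') nbr E x
  else [set u].
Definition symE E := forall x y, (x, y) \in E -> (y, x) \in E.

Lemma ball0 E u : u \in ball E u 0.
Proof. by rewrite /= set11. Qed.

Lemma ball_S E u j : ball E u j \subset ball E u j.+1.
Proof. by rewrite /= subsetUl. Qed.

Lemma ball_le E u j j' : j <= j' -> ball E u j \subset ball E u j'.
Proof.
move=> /subnK <-; elim: (j' - j) => [|m IH] //=.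
by apply: subset_trans IH (ball_S _ _ _).
Qed.

Lemma ball_u E u j : u \in ball E u j.
Proof. by apply: (subsetP (ball_le E u (leq0n j))); apply: ball0. Qed.

Lemma ball_step E u j x w : x \in ball E u j -> (x, w) \in E -> w \in ball E u j.+1.
Proof.
move=> xb xw /=; apply/setUP; right; apply/bigcupP; exists x => //.
by rewrite inE.
Qed.

Lemma ball_succP E u j w : w \in ball E u j.+1 ->
  w \in ball E u j \/ exists2 x, x \in ball E u j & (x, w) \in E.
Proof.
move=> /setUP [h|/bigcupP [x xb]]; first by left.
by rewrite inE => xw; right; exists x.
Qed.

Lemma ball_monoE E E' u j : E \subset E' -> ball E u j \subset ball E' u j.
Proof.
move=> sE; elim: j => [|j IH] //=; apply/subsetP=> w /ball_succP [h|[x xb xw]].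
  by apply: (subsetP (ball_S _ _ _)); apply: (subsetP IH).
by apply: (ball_step (subsetP IH x xb)); apply: (subsetP sE).
Qed.

Lemma ball_trans E u x p q : x \in ball E u p -> ball E x q \subset ball E u (p + q).
Proof.
move=> xb; elim: q => [|q IH].
  by apply/subsetP=> w; rewrite /= inE => /eqP ->; rewrite addn0.
apply/subsetP=> w /ball_succP [h|[y yb yw]].
  by rewrite addnS; apply: (subsetP (ball_S _ _ _)); apply: (subsetP IH).
by rewrite addnS; apply: (ball_step (subsetP IH y yb)).
Qed.

Lemma ball_sym E u v j : symE E -> v \in ball E u j -> u \in ball E v j.
Proof.
move=> sE; elim: j v => [|j IH] v.
  by rewrite /= !inE => /eqP ->.
move=> /ball_succP [h|[x xb xv]].
  by apply: (subsetP (ball_S _ _ _)); apply: IH.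
have h1 : x \in ball E v 1 by apply: (ball_step (ball0 _ _)); apply: sE.
by rewrite -add1n; apply: (subsetP (ball_trans _ h1)); apply: IH.
Qed.

Lemma card_bigcup_le (I : finType) (A : {pred I}) (F : I -> {set T}) :
  #|\bigcup_(i in A) F i| <= \sum_(i in A) #|F i|.
Proof.
apply: (big_ind2 (fun (X : {set T}) n => #|X| <= n)).
- by rewrite cards0.
- move=> X1 n1 X2 n2 h1 h2; rewrite cardsU.
  by apply: leq_trans (leq_subr _ _) _; apply: leq_add.
- by [].
Qed.

Lemma ball_card E u j D : (forall x, #|nbr E x| <= D) -> #|ball E u j| <= expn D.+1 j.
Proof.
move=> hD; elim: j => [|j IH]; first by rewrite /= cards1.
rewrite /= cardsU; apply: leq_trans (leq_subr _ _) _.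
have h1 := card_bigcup_le (ball E u j) (nbr E).
have h2 : \sum_(i in ball E u j) #|nbr E i| <= \sum_(i in ball E u j) D.
  by apply: leq_sum => i _; apply: hD.
rewrite sum_nat_const in h2.
rewrite expnS mulSn; apply: leq_add => //.
apply: leq_trans h1 _; apply: leq_trans h2 _.
by rewrite mulnC; apply: leq_mul.
Qed.

End Balls.

Section Good.
Variable T : finType.
Implicit Types (E H K : {set T * T}) (a b u v w x : T).

Definition remE E a b := E :\ (a, b) :\ (b, a).
Definition addE E u v := E :|: [set (u, v); (v, u)].
Definition good (t : nat) E :=
  [forall a, forall b, ((a, b) \in E) ==> (b \notin ball (remE E a b) a t.-1)].

Lemma ball_add K u v a j w : w \in ball (addE K u v) a j ->
  [\/ w \in ball K a j,
      exists i1 i2, [/\ i1 + i2 < j, u \in ball K a i1 & w \in ball K v i2] |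
      exists i1 i2, [/\ i1 + i2 < j, v \in ball K a i1 & w \in ball K u i2]].
Proof.
elim: j w => [|j IH] w.
  by rewrite /= => h; apply: Or31; rewrite /= h.
move=> /ball_succP [/IH [h|[i1 [i2 [h1 h2 h3]]]|[i1 [i2 [h1 h2 h3]]]]|[x xb xw]].
- by apply: Or31; apply: (subsetP (ball_S _ _ _)).
- by apply: Or32; exists i1, i2; split => //; apply: ltn_trans h1 _.
- by apply: Or33; exists i1, i2; split => //; apply: ltn_trans h1 _.
rewrite /addE !inE in xw; case/orP: xw => [xw|/orP [/eqP [ex ew]|/eqP [ex ew]]]; subst.
- case: (IH x xb) => [h|[i1 [i2 [h1 h2 h3]]]|[i1 [i2 [h1 h2 h3]]]].
  + by apply: Or31; apply: ball_step h xw.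
  + by apply: Or32; exists i1, i2.+1; split => //; [rewrite addnS|apply: ball_step h3 xw].
  + by apply: Or33; exists i1, i2.+1; split => //; [rewrite addnS|apply: ball_step h3 xw].
- case: (IH u xb) => [h|[i1 [i2 [h1 h2 h3]]]|[i1 [i2 [h1 h2 h3]]]].
  + by apply: Or32; exists j, 0; split => //; [rewrite addn0|apply: ball0].
  + apply: Or32; exists i1, 0; split => //; [|apply: ball0].
    by rewrite addn0; apply: leq_ltn_trans (leq_addr i2 i1) _; apply: ltn_trans h1 _.
  + have hi : i1 <= j.+1 by apply: leq_trans (leq_addr i2 i1) _; apply: ltnW; apply: ltn_trans h1 _.
    by apply: Or31; apply: (subsetP (ball_le _ _ hi) _ h2).
- case: (IH v xb) => [h|[i1 [i2 [h1 h2 h3]]]|[i1 [i2 [h1 h2 h3]]]].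
  + by apply: Or33; exists j, 0; split => //; [rewrite addn0|apply: ball0].
  + have hi : i1 <= j.+1 by apply: leq_trans (leq_addr i2 i1) _; apply: ltnW; apply: ltn_trans h1 _.
    by apply: Or31; apply: (subsetP (ball_le _ _ hi) _ h2).
  + apply: Or33; exists i1, 0; split => //; [|apply: ball0].
    by rewrite addn0; apply: leq_ltn_trans (leq_addr i2 i1) _; apply: ltn_trans h1 _.
Qed.

Lemma good_add t H u v : symE H -> good t H -> (u, v) \notin H ->
  v \notin ball H u t.-1 -> good t (addE H u v).
Proof.
move=> sH gH uvH vb.
have ub : u \notin ball H v t.-1.
  by apply/negP => /(ball_sym sH); apply/negP.
have vuH : (v, u) \notin H by apply/negP => /sH; apply/negP.
have sub1 : forall a b, (a, b) \in [set (u, v); (v, u)] ->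
    remE (addE H u v) a b \subset H.
  move=> a b hab; apply/subsetP => q; rewrite /remE /addE !inE.
  move: hab; rewrite !inE => /orP [] /eqP [-> ->].
  - by case/andP => h1 /andP [h2 /orP [//|/orP []]] /eqP qe; move: h1 h2; rewrite qe eqxx // andbF.
  - by case/andP => h1 /andP [h2 /orP [//|/orP []]] /eqP qe; move: h1 h2; rewrite qe eqxx // andbF.
apply/forallP => a; apply/forallP => b; apply/implyP => hab.
have [abH|abN] := boolP ((a, b) \in H); last first.
  have hab' : (a, b) \in [set (u, v); (v, u)].
    by move: hab; rewrite /addE inE (negbTE abN).
  have sb := ball_monoE a t.-1 (sub1 _ _ hab').
  move: hab'; rewrite !inE => /orP [] /eqP [ea eb]; subst a b.
  - by apply/negP => /(subsetP sb); apply/negP.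
  - by apply/negP => /(subsetP sb); apply/negP.
have sub2 : remE (addE H u v) a b \subset addE (remE H a b) u v.
  apply/subsetP => q; rewrite /remE /addE !inE.
  by case/and3P => -> -> /orP [->|->]; rewrite ?orbT.
have sub3 : remE H a b \subset H.
  by apply/subsetP => q; rewrite /remE !inE => /and3P [].
apply/negP => /(subsetP (ball_monoE _ _ sub2)) /ball_add
  [h|[i1 [i2 [h1 h2 h3]]]|[i1 [i2 [h1 h2 h3]]]].
- by move/forallP: gH => /(_ a) /forallP /(_ b) /implyP /(_ abH); rewrite h.
- move: (subsetP (ball_monoE _ _ sub3) _ h2) (subsetP (ball_monoE _ _ sub3) _ h3) => h2' h3'.
  have ha : a \in ball H v i2.+1 by apply: ball_step h3' (sH _ _ abH).
  have hi : i2.+1 + i1 <= t.-1 by rewrite addSn addnC.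
  have := subsetP (ball_le _ _ hi) _ (subsetP (ball_trans i1 ha) _ h2').
  by apply/negP.
- move: (subsetP (ball_monoE _ _ sub3) _ h2) (subsetP (ball_monoE _ _ sub3) _ h3) => h2' h3'.
  have ha : a \in ball H u i2.+1 by apply: ball_step h3' (sH _ _ abH).
  have hi : i2.+1 + i1 <= t.-1 by rewrite addSn addnC.
  have := subsetP (ball_le _ _ hi) _ (subsetP (ball_trans i1 ha) _ h2').
  by apply/negP.
Qed.

End Good.

Section Host.
Variable T : finType.
Implicit Types (E H : {set T * T}).

Lemma card_nbr_sum E : #|E| = \sum_x #|nbr E x|.
Proof.
rewrite -sum1_card big_mkcond /=.
transitivity (\sum_(p : T * T) (fun x y => if (x, y) \in E then 1 else 0) p.1 p.2).
  by apply: eq_bigr => -[x y].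
rewrite -(pair_bigA _ (fun x y => if (x, y) \in E then 1 else 0)) /=.
apply: eq_bigr => x _; rewrite -sum1_card [RHS]big_mkcond /=.
by apply: eq_bigr => y _; rewrite inE.
Qed.

Definition Pgood t D E :=
  [&& [forall x, (x, x) \notin E],
      [forall x, forall y, ((x, y) \in E) ==> ((y, x) \in E)],
      [forall x, #|nbr E x| <= D] & good t E].

Lemma Pgood0 t D : Pgood t D set0.
Proof.
apply/and4P; split.
- by apply/forallP => x; rewrite inE.
- by apply/forallP => x; apply/forallP => y; rewrite inE.
- apply/forallP => x; rewrite (_ : nbr set0 x = set0) ?cards0 //.
  by apply/setP => y; rewrite !inE.
- by apply/forallP => a; apply/forallP => b; rewrite inE.
Qed.

Lemma host t D : 2 <= t ->
  exists H, [/\ symE H, forall x, (x, x) \notin H, good t H &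
    #|T| * D <= #|H| + D * (expn D.+1 t.-1)].
Proof.
move=> t2.
case: (arg_maxnP (fun H : {set T * T} => #|H|) (Pgood0 t D)) => H PH Hmax.
case/and4P: PH => /forallP irr /forallP symb /forallP degD gH.
have sH : symE H.
  by move=> x y xy; move: (symb x) => /forallP /(_ y) /implyP /(_ xy).
exists H; split => //.
set U := [set x | #|nbr H x| < D].
have claim : forall u v, u \in U -> v \in U -> v \in ball H u t.-1.
  move=> u v uU vU.
  have [-> | nuv] := eqVneq u v; first by apply: ball_u.
  have [uvH|uvN] := boolP ((u, v) \in H).
    have hi : 1 <= t.-1 by case: t t2 {Hmax gH} => [|[|tt]].
    by apply: (subsetP (ball_le _ _ hi)); apply: ball_step (ball0 _ _) uvH.
  apply/negPn/negP => vb.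
  have gH' := good_add sH gH uvN vb.
  have PH' : Pgood t D (addE H u v).
    apply/and4P; split.
    - apply/forallP => x; rewrite /addE !inE (negbTE (irr x)) /=.
      apply/negP => /orP [] /eqP [e1 e2]; subst; by rewrite eqxx in nuv.
    - apply/forallP => x; apply/forallP => y; apply/implyP.
      rewrite /addE !inE => /orP [/sH ->//|/orP [] /eqP [-> ->]]; by rewrite eqxx !orbT.
    - apply/forallP => x.
      have sub : nbr (addE H u v) x \subset nbr H x :|: [set y | ((x == u) && (y == v)) || ((x == v) && (y == u))].
        apply/subsetP => y; rewrite !inE => /orP [->//|/orP [] /eqP [-> ->]]; by rewrite !eqxx ?orbT.
      apply: leq_trans (subset_leq_card sub) _.
      rewrite cardsU; apply: leq_trans (leq_subr _ _) _.
      have [exu|nxu] := eqVneq x u.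
        subst x; rewrite (negbTE nuv) /=.
        have -> : [set y | (y == v) || false] = [set v] by apply/setP => y; rewrite !inE orbF.
        by rewrite cards1 addn1; move: uU; rewrite inE.
      have [exv|nxv] := eqVneq x v.
        subst x; rewrite /=.
        have -> : [set y | y == u] = [set u] by apply/setP => y; rewrite !inE.
        by rewrite cards1 addn1; move: vU; rewrite inE.
      have e0 : [set y | false && (y == v) || false && (y == u)] = set0.
        by apply/setP => y; rewrite !inE.
      by rewrite e0 cards0 addn0.
    - exact: gH'.
  have := Hmax _ PH'.
  have pr : H \proper addE H u v.
    apply/properP; split; first by apply: subsetUl.
    by exists (u, v) => //; rewrite /addE !inE eqxx orbT.
  by move=> /(leq_trans (proper_card pr)); rewrite ltnn.
have cardU : #|U| <= expn D.+1 t.-1.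
  have [-> | [u uU]] := set_0Vmem U; first by rewrite cards0.
  have sub : U \subset ball H u t.-1 by apply/subsetP => v vU; apply: claim.
  apply: leq_trans (subset_leq_card sub) _.
  by apply: ball_card => x; apply: degD.
have edges : (#|T| - #|U|) * D <= #|H|.
  rewrite card_nbr_sum -(cardsC U) addKn.
  have -> : #|~: U| * D = \sum_x ((x \notin U) * D).
    rewrite -big_distrl /=; congr (_ * _).
    by rewrite -sum1_card big_mkcond /=; apply: eq_bigr => x _; rewrite inE.
  apply: leq_sum => x _; case: (boolP (x \in U)) => //= xU.
  by rewrite mul1n; move: xU; rewrite inE -leqNgt.
rewrite mulnBl in edges.
have h : #|T| * D <= #|H| + #|U| * D by rewrite addnC -leq_subLR.
apply: leq_trans h _; rewrite leq_add2l mulnC; exact: leq_mul.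
Qed.

End Host.

Lemma orient k (H : {set 'I_k * 'I_k}) : symE H -> (forall x, (x, x) \notin H) ->
  #|H| <= 2 * #|[set p in H | p.1 < p.2]|.
Proof.
move=> sH irr; set O := [set p in H | p.1 < p.2].
have sub : H \subset O :|: [set (p.2, p.1) | p in O].
  apply/subsetP => -[a b] abH.
  have [ab|ba|eab] := ltngtP a b.
  - by apply/setUP; left; rewrite inE abH ab.
  - apply/setUP; right; apply/imsetP; exists (b, a) => //.
    by rewrite inE /= ba sH.
  - by have := irr a; rewrite {2}(val_inj eab) abH.
apply: leq_trans (subset_leq_card sub) _.
rewrite cardsU mul2n -addnn; apply: leq_trans (leq_subr _ _) _.
by rewrite leq_add2l leq_imset_card.
Qed.

Lemma doubleton (T : finType) (a b c d : T) : [set a; b] = [set c; d] ->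
  (a = c /\ b = d) \/ (a = d /\ b = c).
Proof.
move=> e.
have ha : a \in [set c; d] by rewrite -e !inE eqxx.
have hb : b \in [set c; d] by rewrite -e !inE eqxx orbT.
have hc : c \in [set a; b] by rewrite e !inE eqxx.
have hd : d \in [set a; b] by rewrite e !inE eqxx orbT.
move: ha hb hc hd; rewrite !inE => /orP [] /eqP ea /orP [] /eqP eb; subst => hc hd.
- by left; split => //; move: hd; rewrite orbb => /eqP.
- by left.
- by right.
- by right; split => //; move: hc; rewrite orbb => /eqP.
Qed.

Lemma walk_lip n (G : graph n) (phi : 'I_n -> nat) :
  (forall z z', adj G z z' -> phi z' <= (phi z).+1) ->
  forall s z, path (adj G) z s -> phi (last z s) <= phi z + size s.
Proof.
move=> hl; elim=> [|w s IH] z /=; first by rewrite addn0.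
case/andP => hzw hp; apply: leq_trans (IH _ hp) _.
by rewrite addnS -addSn leq_add2r hl.
Qed.

Section Gadget.
Variables (k Lp M : nat).
Local Notation L := Lp.+1.
Definition Vt := ('I_k + ('I_k * 'I_k) * 'I_L)%type.
Definition nn := #|{: Vt}| + M.
Definition iota_v (x : Vt) : 'I_nn := widen_ord (leq_addr M _) (enum_rank x).

Lemma iota_inj : injective iota_v.
Proof.
by move=> x y /(congr1 val) /= /val_inj /enum_rank_inj.
Qed.

Definition node (p : 'I_k * 'I_k) (j : nat) : Vt :=
  if j == 0 then inl p.1 else if j < L then inr (p, inord j) else inl p.2.

Definition edge p j : {set 'I_nn} := [set iota_v (node p j); iota_v (node p j.+1)].

Definition Gr (S : {set 'I_k * 'I_k}) : graph nn :=
  [set edge pj.1 (nat_of_ord pj.2) | pj in setX S [set: 'I_L]].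

Lemma node_neq p j : 0 < Lp -> j < L -> node p j != node p j.+1.
Proof.
move=> L2 jL; rewrite /node /=.
case: j jL => [|j] jL /=.
  by rewrite ltnS L2.
rewrite jL; case: ifP => h2 //.
apply/negP => /eqP [] e.
have := congr1 (@nat_of_ord _) e; rewrite inordK // inordK //.
by move=> /succn_inj h; have := ltnSn j; rewrite -{2}h ltnn.
Qed.

Lemma Gr_simple S : 0 < Lp -> simple_graph (Gr S).
Proof.
move=> L2 e /imsetP [[p j] _ ->] /=.
by rewrite /edge cards2 (inj_eq iota_inj) node_neq.
Qed.

Lemma Gr_card S : #|Gr S| <= #|S| * L.
Proof.
apply: leq_trans (leq_imset_card _ _) _.
by rewrite cardsX cardsT card_ord.
Qed.

Lemma Gr_adj (S : {set 'I_k * 'I_k}) p j : 0 < Lp -> p \in S -> j < L ->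
  adj (Gr S) (iota_v (node p j)) (iota_v (node p j.+1)).
Proof.
move=> L2 pS jL; rewrite /adj (inj_eq iota_inj) node_neq //=.
apply/imsetP; exists (p, Ordinal jL) => //.
by rewrite inE pS inE.
Qed.

Lemma Gr_walk (S : {set 'I_k * 'I_k}) p : 0 < Lp -> p \in S -> forall m i, i + m <= L ->
  path (adj (Gr S)) (iota_v (node p i)) [seq iota_v (node p j) | j <- iota i.+1 m] /\
  last (iota_v (node p i)) [seq iota_v (node p j) | j <- iota i.+1 m] = iota_v (node p (i + m)).
Proof.
move=> L2 pS; elim=> [|m IH] i him /=; first by rewrite addn0.
have him' : i.+1 + m <= L by rewrite addSn -addnS.
have [h1 h2] := IH i.+1 him'.
rewrite h1 h2 addSn -addnS andbT; split => //.
by apply: Gr_adj => //; apply: leq_trans him; rewrite addnS ltnS leq_addr.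
Qed.

End Gadget.

Definition psi (T : finType) (R : {set T * T}) u t w := \sum_(j < t) (w \notin ball R u j).

Lemma psi_lip (T : finType) (R : {set T * T}) u t x w : (x, w) \in R ->
  psi R u t w <= (psi R u t x).+1.
Proof.
move=> xw; rewrite /psi; case: t => [|t]; first by rewrite !big_ord0.
rewrite big_ord_recl [X in _ <= X.+1]big_ord_recr /=.
have hs : \sum_(j < t) (w \notin ball R u (lift ord0 j)) <= \sum_(j < t) (x \notin ball R u j).
  apply: leq_sum => j _.
  case: (boolP (w \in ball R u (lift ord0 j))) => //= wb.
  case: (boolP (x \in ball R u j)) => //= xb.
  by move: wb; rewrite /= (ball_step xb xw).
apply: leq_trans (leq_add (leq_b1 _) hs) _.
by rewrite add1n ltnS leq_addr.
Qed.

Lemma psi_u (T : finType) (R : {set T * T}) u t : psi R u t u = 0.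
Proof. by rewrite /psi big1 // => j _; rewrite ball_u. Qed.

Lemma psi_v (T : finType) (R : {set T * T}) u v t : v \notin ball R u t.-1 -> psi R u t v = t.
Proof.
move=> vb; rewrite /psi (eq_bigr (fun _ => 1)) ?sum1_card ?card_ord // => j _.
case: (boolP (v \in ball R u j)) => //= h.
have hj : j <= t.-1 by case: j {h} => j /= jt; case: t jt vb => [|t].
by move: vb; rewrite (subsetP (ball_le _ _ hj) _ h).
Qed.

Lemma arith1 a b c j : b <= a.+1 -> c * a + j.+1 * b <= (c.+1 * a + j * b).+1.
Proof. rewrite !mulSn => h; lia. Qed.

Lemma arith2 a b c j : a <= b.+1 -> c.+1 * a + j * b <= (c * a + j.+1 * b).+1.
Proof. rewrite !mulSn => h; lia. Qed.

Section Lip.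
Variables (k Lp M : nat).
Local Notation L := Lp.+1.
Variable ps : 'I_k -> nat.

Definition phi (x : Vt k Lp) : nat :=
  match x with
  | inl a => L * ps a
  | inr (p, s) => (L - s) * ps p.1 + s * ps p.2
  end.

Lemma phi_node p j : j <= L -> phi (node Lp p j) = (L - j) * ps p.1 + j * ps p.2.
Proof.
move=> jL; rewrite /node.
case: j jL => [|j] jL /=; first by rewrite subn0 mul0n addn0.
case: ifP => h /=; first by rewrite inordK.
have -> : j.+1 = L by apply/eqP; rewrite eqn_leq jL leqNgt h.
by rewrite subnn mul0n.
Qed.

Definition phin (z : 'I_(nn k Lp M)) : nat :=
  if [pick x | iota_v M x == z] is Some x then phi x else 0.

Lemma phin_iota x : phin (iota_v M x) = phi x.
Proof.
rewrite /phin; case: pickP => [y /eqP /(iota_inj) -> //|].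
by move=> /(_ x); rewrite eqxx.
Qed.

Lemma phin_lip (S : {set 'I_k * 'I_k}) :
  (forall p, p \in S -> ps p.2 <= (ps p.1).+1 /\ ps p.1 <= (ps p.2).+1) ->
  forall z z', adj (Gr Lp M S) z z' -> phin z' <= (phin z).+1.
Proof.
move=> hS z z' /andP [_ /imsetP [[p j] /setXP [pS _] /= e]].
have [h1 h2] := hS p pS.
have jL : j <= L by apply: ltnW.
have jL' : j.+1 <= L by [].
have hsub : L - j = (L - j.+1).+1 by rewrite subnSK.
case: (doubleton e) => -[-> ->]; rewrite !phin_iota !phi_node // hsub.
- exact: arith1.
- exact: arith2.
Qed.

End Lip.

Lemma upper k Lp M (S : {set 'I_k * 'I_k}) p : 0 < Lp -> p \in S ->
  walk (Gr Lp M S) (iota_v M (inl p.1)) (iota_v M (inl p.2))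
    [seq iota_v M (node Lp p j) | j <- iota 1 Lp.+1].
Proof.
move=> L2 pS; have [h1 h2] := Gr_walk M L2 pS (leqnn (0 + Lp.+1)).
split; first exact: h1.
rewrite h2 add0n /node /= ltnn //.
Qed.

Lemma lower k Lp M t (H O S : {set 'I_k * 'I_k}) p : 0 < Lp ->
  symE H -> good t H -> O \subset H -> (forall q, q \in O -> q.1 < q.2) ->
  S \subset O -> p \in O -> p \notin S ->
  forall s, walk (Gr Lp M S) (iota_v M (inl p.1)) (iota_v M (inl p.2)) s ->
  Lp.+1 * t <= size s.
Proof.
move=> L2 sH gH OH Oord SO pO pS s [hp hl].
case: p pO pS hp hl => u v pO pS hp hl /=.
set R := [set q | (q \in S) || ((q.2, q.1) \in S)].
have uvH : (u, v) \in H by apply: (subsetP OH).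
have uv : u < v by apply: (Oord _ pO).
have RH : R \subset remE H u v.
  apply/subsetP => -[a b]; rewrite /R /remE !inE /= => /orP [] h.
  - have hO := subsetP SO _ h; have ab := Oord _ hO.
    rewrite (subsetP OH _ hO) andbT; apply/andP; split.
    + apply/negP => /eqP [ea eb]; subst; move: ab; rewrite /=.
      by move=> ab; have := ltn_trans ab uv; rewrite ltnn.
    + by apply/negP => /eqP [ea eb]; subst; rewrite h in pS.
  - have hO := subsetP SO _ h; have ab := Oord _ hO.
    rewrite (sH _ _ (subsetP OH _ hO)) andbT; apply/andP; split.
    + by apply/negP => /eqP [ea eb]; subst; rewrite h in pS.
    + apply/negP => /eqP [ea eb]; subst; move: ab; rewrite /=.
      by move=> ab; have := ltn_trans ab uv; rewrite ltnn.
have vb : v \notin ball R u t.-1.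
  apply/negP => /(subsetP (ball_monoE _ _ RH)).
  by move/forallP: gH => /(_ u) /forallP /(_ v) /implyP /(_ uvH) /negP.
set ps := psi R u t.
have lipS : forall q, q \in S -> ps q.2 <= (ps q.1).+1 /\ ps q.1 <= (ps q.2).+1.
  move=> [a b] qS /=; split; apply: psi_lip; rewrite /R inE /= ?qS //.
  by rewrite orbT.
have := walk_lip (phin_lip lipS) hp.
by rewrite hl !phin_iota /= /ps psi_u psi_v // muln0 add0n.
Qed.

Definition pad m (s : seq bool) := s ++ true :: nseq (m - (size s).+1) false.

Lemma size_pad m s : size s < m -> size (pad m s) = m.
Proof.
move=> h; rewrite /pad size_cat /= size_nseq.
by rewrite addnS -addSn subnKC.
Qed.

Lemma nth_pad_true m s : nth false (pad m s) (size s) = true.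
Proof. by rewrite /pad nth_cat ltnn subnn. Qed.

Lemma nth_pad_false m s i : size s < i -> nth false (pad m s) i = false.
Proof.
move=> h; rewrite /pad nth_cat ltnNge ltnW //=.
case: (i - size s) (subn_gt0 (size s) i) => [|j] /=; first by rewrite h.
by move=> _; rewrite nth_nseq if_same.
Qed.

Lemma pad_inj m s1 s2 : pad m s1 = pad m s2 -> s1 = s2.
Proof.
move=> e.
have es : size s1 = size s2.
  case: (ltngtP (size s1) (size s2)) => // h.
  - by have := nth_pad_false m h; rewrite e nth_pad_true.
  - by have := nth_pad_false m h; rewrite -e nth_pad_true.
by rewrite -(take_size_cat (true :: nseq (m - (size s1).+1) false) (erefl (size s1))) -/(pad m s1) e
   es /pad take_size_cat.
Qed.

Lemma count_bits (T : finType) (A : {set T}) (g : T -> seq bool) m :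
  {in A &, injective g} -> (forall a, a \in A -> size (g a) < m) -> #|A| <= expn 2 m.
Proof.
move=> ginj hs.
pose h a := [ffun i : 'I_m => nth false (pad m (g a)) i].
have hinj : {in A &, injective h}.
  move=> a b aA bA /ffunP e; apply: ginj => //; apply: (@pad_inj m).
  apply: (@eq_from_nth _ false); first by rewrite !size_pad ?hs.
  move=> i; rewrite size_pad ?hs // => im.
  by have := e (Ordinal im); rewrite !ffunE.
rewrite -(card_in_imset hinj).
apply: (leq_trans (max_card _)).
by rewrite card_ffun card_bool card_ord.
Qed.

Lemma exists_long (T : finType) (O : {set T}) (g : {set T} -> seq bool) :
  {in powerset O &, injective g} ->
  exists S, S \in powerset O /\ #|O| <= (size (g S)).+1.
Proof.
move=> ginj.
case: (boolP [exists S in powerset O, #|O| <= (size (g S)).+1]).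
  by move=> /existsP [S /andP [h1 h2]]; exists S.
rewrite negb_exists => /forallP hS.
have hs : forall S, S \in powerset O -> size (g S) < #|O|.-1.
  move=> S SO; have := hS S; rewrite SO /= -ltnNge.
  by case: #|O| => // n; rewrite ltnS.
have := count_bits ginj hs; rewrite card_powerset.
have : 0 < #|O|.
  have := hS set0; rewrite inE sub0set /= -ltnNge.
  by case: #|O|.
case: #|O| => // n _; rewrite expnS /= => h.
have : 0 < expn 2 n by rewrite expn_gt0.
move: h; set q := expn 2 n => h q0.
move: h; rewrite mul2n -addnn -{3}[q]add0n leq_add2r leqn0 => /eqP q00.
by rewrite q00 in q0.
Qed.

Unset Implicit Arguments.

Lemma est_contra n (G1 G2 : graph n) x y (Lr t : nat) (e : option R) (eps : R) :
  (exists s, walk G1 x y s /\ size s = Lr) ->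
  (forall s, walk G2 x y s -> (Lr * t <= size s)%N) -> x <> y -> (2 <= t)%N ->
  Lr = (2 * t)%N -> (0 < eps)%R ->
  (mult_ok G1 x y (INR t - eps) e /\ mult_ok G2 x y (INR t - eps) e) \/
  (add_ok G1 x y (2 * INR t - 3) e /\ add_ok G2 x y (2 * INR t - 3) e) -> False.
Proof.
move=> [s1 [w1 hs1]] low nxy t2 eL eps0 H.
have conn : connected G1 x y by exists s1.
have key : forall d1 d2, is_dist G1 x y d1 -> is_dist G2 x y d2 ->
    [/\ (INR d1 <= INR Lr)%R, (1 <= INR d1)%R & (INR Lr * INR t <= INR d2)%R].
  move=> d1 d2 [[p1 [wp1 sp1]] hd1] [[p2 [wp2 sp2]] _].
  split.
  - by apply: le_INR; apply/leP; rewrite -hs1; apply: hd1.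
  - case: d1 sp1 {hd1} => [|d1] sp1; last by apply: (le_INR 1); apply/leP.
    case: p1 wp1 sp1 => // -[_ /= exy] _; by case: nxy.
  - rewrite -mult_INR; apply: le_INR; apply/leP; rewrite -sp2; apply: low.
    exact: wp2.
have t2R : (2 <= INR t)%R by apply: (le_INR 2); apply/leP.
have LR : INR Lr = (2 * INR t)%R by rewrite eL mult_INR.
case: e H => [r|] H; last first.
  by case: H => -[h1 _]; apply: h1.
case: H => -[[d1 [h1 [r1 r2]]] [d2 [h2 [r3 r4]]]];
  have [k1 k2 k3] := key d1 d2 h1 h2; rewrite LR in k1 k3.
- have m1 : (INR t * INR d1 <= INR t * (2 * INR t))%R.
    by apply: Rmult_le_compat_l => //; lra.
  have m2 : (eps * 1 <= eps * INR d1)%R by apply: Rmult_le_compat_l => //; lra.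
  nra.
- nra.
Qed.

Lemma nat_unbounded (r : R) : exists M : nat, (r <= INR M)%R.
Proof.
have [h1 _] := archimed r.
case: (Z.le_gt_cases 0 (up r)) => hz.
- exists (Z.to_nat (up r)); rewrite INR_IZR_INZ Znat.Z2Nat.id //; lra.
- exists 0%N; have : (IZR (up r) <= 0)%R by apply: IZR_le; apply: Z.lt_le_incl.
  rewrite /=; lra.
Qed.

Lemma INR_expn a n : INR (expn a n) = (INR a ^ n)%R.
Proof. by elim: n => [|n IH]; rewrite ?expn0 // expnS mult_INR IH. Qed.

Lemma rpow_eval (D t : nat) : (2 <= t)%N ->
  Rpower (INR (expn (2 * D.+1) t.-1)) (1 + 1 / (INR t - 1)) =
  (INR (expn (2 * D.+1) t.-1) * INR (2 * D.+1))%R.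
Proof.
move=> t2.
have pos : (0 < INR (2 * D.+1))%R by apply: (lt_INR 0); apply/ltP.
have et : INR t = (INR t.-1 + 1)%R by case: t t2 => // t' _; rewrite S_INR.
have nz : (INR t - 1 <> 0)%R.
  rewrite et; have : (1 <= INR t.-1)%R by apply: (le_INR 1); apply/leP; case: t t2 {et}=> [|[]].
  lra.
have e1 : INR (expn (2 * D.+1) t.-1) = Rpower (INR (2 * D.+1)) (INR t.-1).
  by rewrite Rpower_pow // INR_expn.
have kpos : (0 < INR (expn (2 * D.+1) t.-1))%R.
  by rewrite e1; apply: exp_pos.
rewrite Rpower_plus Rpower_1 //; congr (_ * _)%R.
rewrite e1 Rpower_mult.
have -> : (INR t.-1 * (1 / (INR t - 1)) = 1)%R by rewrite et; field; rewrite -et.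
by rewrite Rpower_1.
Qed.

Lemma arith3 kk D Q h o s : (kk * D <= h + D * Q)%N -> (2 * Q <= kk)%N ->
  (h <= 2 * o)%N -> (o <= s.+1)%N -> (kk * D <= 4 * s + 4)%N.
Proof.
move=> h1 h2 h3 h4; have h5 := leq_mul (leqnn D) h2.
rewrite mulnA [D * 2]mulnC -mulnA in h5; lia.
Qed.

Theorem theorem1p5 :
  forall (t : nat) (eps : R), (2 <= t)%N -> (0 < eps)%R ->
  exists C c : R, (0 < C)%R /\ (0 < c)%R /\
  forall (N : nat) (delta : R), (0 < delta)%R ->
  exists (k n : nat) (K : {set 'I_n}) (F : {set graph n}),
    (N <= k)%N /\ #|K| = k /\ (INR k <= delta * INR n)%R /\
    (forall G, G \in F -> simple_graph G /\ (INR (nedges G) <= C * INR n)%R) /\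
    forall (f : graph n -> seq bool) (dec : seq bool -> 'I_n -> 'I_n -> option R),
      ((forall G, G \in F -> forall x y, x \in K -> y \in K ->
          mult_ok G x y (INR t - eps)%R (dec (f G) x y)) \/
       (forall G, G \in F -> forall x y, x \in K -> y \in K ->
          add_ok G x y (2 * INR t - 3)%R (dec (f G) x y))) ->
      exists G, G \in F /\
        (c * Rpower (INR k) (1 + 1 / (INR t - 1)) <= INR (size (f G)))%R.
Proof.
move=> t eps t2 eps0.
have t0 : (0 < 2 * t)%N by rewrite muln_gt0 /= (ltn_trans _ t2).
exists (INR (2 * t)), (1 / 48)%R; split; first by apply: (lt_INR 0); apply/ltP.
split; first lra.
move=> N delta dpos.
have t1 : (1 <= t.-1)%N by move: t2; case: t {t0} => [|[]].
have L2 : (0 < (2 * t).-1)%N by move: t2; case: t {t0 t1} => [|[|t']] //=; rewrite mul2n doubleS.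
pose D := N.+2.
pose kk := expn (2 * D.+1) t.-1.
pose Lp := (2 * t).-1.
have eL : Lp.+1 = (2 * t)%N by rewrite /Lp prednK.
have kkge : (2 * D.+1 <= kk)%N.
  by rewrite /kk -{1}(expn1 (2 * D.+1)); apply: leq_pexp2l.
have [M hM] := nat_unbounded (INR kk / delta).
have [H [sH irr gH hH]] := host 'I_kk D t2.
pose O := [set p in H | p.1 < p.2].
have hO := orient sH irr.
have OH : O \subset H by apply/subsetP => p; rewrite inE => /andP [].
have Oord : forall q, q \in O -> (q.1 < q.2)%N by move=> q; rewrite inE => /andP [].
have cardV : #|{: Vt kk Lp}| = (kk + kk * kk * Lp.+1)%N.
  by rewrite /Vt card_sum !card_prod !card_ord.
exists kk, (nn kk Lp M), ((fun a : 'I_kk => @iota_v kk Lp M (inl a)) @: [set: 'I_kk]),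
  [set Gr Lp M S | S in powerset O].
split.
  apply: leq_trans kkge; rewrite /D mulSn; apply: leq_trans (leq_addr _ _).
  by apply: leq_trans (leqnSn _) _; apply: leqW; apply: leqW.
split.
  rewrite card_imset ?cardsT ?card_ord //.
  by move=> a b /iota_inj [].
split.
  have h1 : (INR M <= INR (nn kk Lp M))%R by apply: le_INR; apply/leP; rewrite /nn leq_addl.
  apply: Rle_trans (_ : delta * (INR kk / delta) <= _)%R.
    by right; field; lra.
  by apply: Rmult_le_compat_l; lra.
split.
  move=> G /imsetP [S SO ->]; split; first exact: Gr_simple.
  rewrite /nedges -mult_INR; apply: le_INR; apply/leP.
  apply: leq_trans (Gr_card Lp M S) _; rewrite eL mulnC leq_mul2l.
  apply/orP; right; apply: leq_trans (max_card _) _.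
  rewrite card_prod card_ord /nn cardV.
  apply: leq_trans (leq_addr M _); apply: leq_trans (leq_addl kk _).
  by rewrite -{1}(muln1 (kk * kk)) leq_mul2l ltn0Sn orbT.
move=> f dec hyp.
have dis : forall A B p, A \in powerset O -> B \in powerset O -> p \in A -> p \notin B ->
    f (Gr Lp M A) = f (Gr Lp M B) -> False.
  move=> A B p AO BO pA pB e.
  have FA : Gr Lp M A \in [set Gr Lp M S | S in powerset O] by apply/imsetP; exists A.
  have FB : Gr Lp M B \in [set Gr Lp M S | S in powerset O] by apply/imsetP; exists B.
  rewrite powersetE in AO; rewrite powersetE in BO.
  have pO : p \in O by apply: (subsetP AO).
  have Hx : @iota_v kk Lp M (inl p.1) \in ((fun a : 'I_kk => @iota_v kk Lp M (inl a)) @: [set: 'I_kk]) by apply/imsetP; exists p.1; rewrite ?inE.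
  have Hy : @iota_v kk Lp M (inl p.2) \in ((fun a : 'I_kk => @iota_v kk Lp M (inl a)) @: [set: 'I_kk]) by apply/imsetP; exists p.2; rewrite ?inE.
  apply: (@est_contra _ (Gr Lp M A) (Gr Lp M B) (@iota_v kk Lp M (inl p.1)) (@iota_v kk Lp M (inl p.2))
            Lp.+1 t (dec (f (Gr Lp M A)) (@iota_v kk Lp M (inl p.1)) (@iota_v kk Lp M (inl p.2))) eps).
  - exists [seq @iota_v kk Lp M (node Lp p j) | j <- iota 1 Lp.+1]; split.
      exact: (upper M L2 pA).
    by rewrite size_map size_iota.
  - by move=> s ws; apply: (lower L2 sH gH OH Oord BO pO pB ws).
  - move/iota_inj => [] ep; have := Oord _ pO; by rewrite ep ltnn.
  - exact: t2.
  - exact: eL.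
  - exact: eps0.
  - case: hyp => h; [left|right]; split; try (by apply: h);
      by rewrite e; apply: h.
have inj : {in powerset O &, injective (fun S => f (Gr Lp M S))}.
  move=> S1 S2 S1O S2O e.
  apply/setP => p; apply/idP/idP => hp; apply/negPn/negP => hn.
  - exact: dis S1 S2 p S1O S2O hp hn e.
  - exact: dis S2 S1 p S2O S1O hp hn (esym e).
have [S [SO hS]] := exists_long inj.
exists (Gr Lp M S); split; first by apply/imsetP; exists S.
rewrite rpow_eval //.
rewrite card_ord in hH.
have h2Q : (2 * expn D.+1 t.-1 <= kk)%N.
  rewrite /kk expnMn leq_mul2r; apply/orP; right.
  by rewrite -{1}(expn1 2); apply: leq_pexp2l.
have hn := arith3 _ _ _ _ _ _ hH h2Q hO hS.
have R1 : (INR kk * INR D <= 4 * INR (size (f (Gr Lp M S))) + 4)%R.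
  rewrite -mult_INR; apply: Rle_trans (_ : INR (4 * size (f (Gr Lp M S)) + 4) <= _)%R.
    by apply: le_INR; apply/leP.
  have e4 : INR 4 = 4%R by rewrite /=; lra.
  by rewrite plus_INR mult_INR e4; right.
have R2 : (6 <= INR kk)%R.
  have : (INR 6 <= INR kk)%R.
    apply: le_INR; apply/leP; apply: leq_trans kkge.
    by rewrite /D mul2n !doubleS.
  rewrite /=; lra.
have R3 : (2 <= INR D)%R by apply: (le_INR 2); apply/leP.
have -> : INR (2 * D.+1) = (2 * (INR D + 1))%R by rewrite mult_INR S_INR.
have h1 : (0 <= INR kk * (INR D - 2))%R by apply: Rmult_le_pos; lra.
have h2 : (0 <= (INR kk - 6) * (INR D - 2))%R by apply: Rmult_le_pos; lra.
rewrite -/kk; lra.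
Qed.
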